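(* Let $a_1,\dots,a_n\in\mathbb{R}^d$, $f_1,\dots,f_n:\mathbb{R}\to[0,\infty)$ twice differentiable, $\gamma:\mathbb{R}^d\to[0,\infty)$, $F(x)=\frac1n\sum_{i=1}^n f_i(a_i^Tx)+\gamma(x)$, $\lambda>0$, $y\in\mathbb{R}^d$, $r>0$, and $F_{\lambda,y}(x)=F(x)+\lambda\|x-y\|_2^2$. Let $\tilde f_i$ and $\tilde F_{\lambda,y}$ be the quadratic approximations defined in the context. Let $B(r,y)=\{x:\|x-y\|_2\le r\}$ and suppose that there are constants $C_1,\dots,C_n\ge 0$ such that for all $x\in B(r,y)$: (i) $f_i(a_i^Tx)-\tilde f_i(x)\le \frac{C_i}{6}\|x-y\|_2^3$ for every $i$; (ii) $F_{\lambda,y}(x)\ge \tilde F_{\lambda,y}(x)$; (iii) $\tilde F_{\lambda,y}(x)>0$. Let $\alpha=\min_{x\in B(r,y)}F_{\lambda,y}(x)$ and assume $\alpha>0$. Then for every $i\in[n]$, $$\sup_{x\in B(r,y)}\frac{\frac1n f_i(a_i^Tx)}{F_{\lambda,y}(x)}\;\le\;\sup_{x\in B(r,y)}\frac{\frac1n \tilde f_i(x)}{\tilde F_{\lambda,y}(x)}+\min\Big(\frac{C_i r}{6n\lambda},\ \frac{C_i r^3}{6n\alpha}\Big).$$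
   Context: Quadratic approximation around $y$: $\tilde f_i(x)=f_i(a_i^Ty)+a_i^T(x-y)f_i'(a_i^Ty)+\tfrac12(a_i^T(x-y))^2f_i''(a_i^Ty)$ and $\tilde F_{\lambda,y}(x)=\frac1n\sum_{i=1}^n\tilde f_i(x)+\gamma(x)+\lambda\|x-y\|_2^2$. The two suprema are the local sensitivities of $a_i$ with respect to $F_{\lambda,y}$ and $\tilde F_{\lambda,y}$ on $B(r,y)$. *)

(* Defs.v *)
From mathcomp Require Import ssreflect ssrfun ssrbool eqtype ssrnat seq fintype bigop.
From Stdlib Require Import Reals.
Open Scope R_scope.

Definition vec (d : nat) := 'I_d -> R.

Definition dot {d : nat} (u v : vec d) : R := \big[Rplus/0]_(k < d) (u k * v k).
Definition vsub {d : nat} (u v : vec d) : vec d := fun k => u k - v k.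
Definition norm2 {d : nat} (u : vec d) : R := sqrt (dot u u).

Definition ball {d : nat} (r : R) (y x : vec d) : Prop := norm2 (vsub x y) <= r.

Definition Fly {d n : nat} (a : 'I_n -> vec d) (f : 'I_n -> R -> R)
  (gamma : vec d -> R) (lam : R) (y x : vec d) : R :=
  / INR n * (\big[Rplus/0]_(i < n) f i (dot (a i) x)) + gamma x
  + lam * (norm2 (vsub x y)) ^ 2.

(* quadratic approximation of f_i(a_i^T .) around y; f1 = f', f2 = f'' *)
Definition ftilde {d : nat} (a : vec d) (f f1 f2 : R -> R) (y x : vec d) : R :=
  f (dot a y) + dot a (vsub x y) * f1 (dot a y)
  + / 2 * (dot a (vsub x y)) ^ 2 * f2 (dot a y).

Definition Ftilde {d n : nat} (a : 'I_n -> vec d) (f f1 f2 : 'I_n -> R -> R)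
  (gamma : vec d -> R) (lam : R) (y x : vec d) : R :=
  / INR n * (\big[Rplus/0]_(i < n) ftilde (a i) (f i) (f1 i) (f2 i) y x) + gamma x
  + lam * (norm2 (vsub x y)) ^ 2.

(* Main.v *)
Require Import Defs.
From mathcomp Require Import ssreflect ssrfun ssrbool eqtype ssrnat seq fintype bigop.
From Stdlib Require Import Reals Lra Psatz.
Open Scope R_scope.
Lemma key (N fi fti F Ft T t lam alpha C r : R) :
  0 < N -> 0 <= fi -> fi <= fti + C/6 * t^3 -> Ft <= F -> 0 < Ft -> alpha <= F -> 0 < alpha ->
  lam * t^2 <= F -> 0 <= t -> t <= r -> 0 < lam -> 0 <= C ->
  / N * fti / Ft <= T -> 0 <= T ->
  / N * fi / F <= T + Rmin (C * r / (6 * N * lam)) (C * r ^ 3 / (6 * N * alpha)).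
Proof.
intros HN Hfi He HFt HFt0 HaF Ha HlF Ht Htr Hl HC HT HT0.
assert (HF : 0 < F) by lra.
set (EE := C/6 * t^3).
assert (HE : 0 <= EE) by (unfold EE; assert (0 <= t^3) by (apply pow_le; lra); nra).
assert (A1 : / N * fi / F <= T + / N * (EE / F)).
{ destruct (Rle_lt_dec 0 fti) as [Hp|Hn].
  - assert (fti / F <= fti / Ft).
    { unfold Rdiv. apply Rmult_le_compat_l; [lra|]. apply Rinv_le_contravar; lra. }
    assert (fi / F <= fti / F + EE / F).
    { unfold Rdiv. rewrite <- Rmult_plus_distr_r. apply Rmult_le_compat_r.
      left; apply Rinv_0_lt_compat; lra. unfold EE; lra. }
    assert (/N * fi / F = /N * (fi/F)) by (unfold Rdiv; ring).
    assert (/N * fti / Ft = /N * (fti/Ft)) by (unfold Rdiv; ring).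
    assert (0 < /N) by (apply Rinv_0_lt_compat; lra).
    nra.
  - assert (fi / F <= EE / F).
    { unfold Rdiv. apply Rmult_le_compat_r.
      left; apply Rinv_0_lt_compat; lra. unfold EE in *; lra. }
    assert (/N * fi / F = /N * (fi/F)) by (unfold Rdiv; ring).
    assert (0 < /N) by (apply Rinv_0_lt_compat; lra).
    nra. }
assert (A2 : EE / F <= C * r / (6 * lam)).
{ apply (Rmult_le_reg_r F); [lra|].
  replace (EE / F * F) with EE by (field; lra).
  apply (Rmult_le_reg_r (6*lam)); [lra|].
  replace (C * r / (6 * lam) * F * (6 * lam)) with (C*r*F) by (field; lra).
  unfold EE.
  replace (C / 6 * t ^ 3 * (6 * lam)) with (C * t * (lam * t^2)) by (field).
  assert (0 <= C*t) by nra.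
  assert (C*t*(lam*t^2) <= C*t*F) by (apply Rmult_le_compat_l; lra).
  assert (C*t*F <= C*r*F) by (apply Rmult_le_compat_r; nra). lra. }
assert (A3 : EE / F <= C * r^3 / (6 * alpha)).
{ apply (Rmult_le_reg_r F); [lra|].
  replace (EE / F * F) with EE by (field; lra).
  apply (Rmult_le_reg_r (6*alpha)); [lra|].
  replace (C * r^3 / (6 * alpha) * F * (6 * alpha)) with (C*r^3*F) by (field; lra).
  unfold EE.
  replace (C / 6 * t ^ 3 * (6 * alpha)) with (C * t^3 * alpha) by (field).
  assert (t^3 <= r^3) by (apply pow_incr; lra).
  assert (0 <= t^3) by (apply pow_le; lra).
  assert (C*t^3 <= C*r^3) by (apply Rmult_le_compat_l; lra).
  assert (0 <= C*t^3) by nra.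
  assert (C*t^3*alpha <= C*t^3*F) by (apply Rmult_le_compat_l; lra).
  assert (C*t^3*F <= C*r^3*F) by (apply Rmult_le_compat_r; lra). lra. }
assert (/ N * (EE / F) <= Rmin (C * r / (6 * N * lam)) (C * r ^ 3 / (6 * N * alpha))).
{ assert (0 < /N) by (apply Rinv_0_lt_compat; lra).
  apply Rmin_glb.
  - replace (C * r / (6 * N * lam)) with (/N * (C * r / (6 * lam))) by (field; lra).
    apply Rmult_le_compat_l; lra.
  - replace (C * r^3 / (6 * N * alpha)) with (/N * (C * r^3 / (6 * alpha))) by (field; lra).
    apply Rmult_le_compat_l; lra. }
lra.
Qed.

Lemma dot_sub0 {d : nat} (a y : vec d) : dot a (vsub y y) = 0.
Proof.
rewrite /dot. apply: (big_ind (fun v => v = 0)) => //.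
- by move=> u v -> ->; rewrite Rplus_0_r.
- by move=> k _; rewrite /vsub Rminus_diag Rmult_0_r.
Qed.

Lemma sum_nonneg (n : nat) (g : 'I_n -> R) : (forall i, 0 <= g i) ->
  0 <= \big[Rplus/0]_(i < n) g i.
Proof.
move=> H. apply: (big_ind (fun v => 0 <= v)).
- lra.
- move=> u v Hu Hv; lra.
- by move=> k _; apply: H.
Qed.
Theorem theorem3 (d n : nat) (a : 'I_n -> vec d)
  (f f1 f2 : 'I_n -> R -> R) (gamma : vec d -> R)
  (lam : R) (y : vec d) (r : R) (C : 'I_n -> R) (alpha : R)
  (hf_nonneg : forall i t, 0 <= f i t)
  (hf1 : forall i t, derivable_pt_lim (f i) t (f1 i t))
  (hf2 : forall i t, derivable_pt_lim (f1 i) t (f2 i t))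
  (hgamma : forall x, 0 <= gamma x)
  (hlam : 0 < lam) (hr : 0 < r)
  (hC : forall i, 0 <= C i)
  (h1 : forall x, ball r y x -> forall i,
      f i (dot (a i) x) - ftilde (a i) (f i) (f1 i) (f2 i) y x
        <= C i / 6 * (norm2 (vsub x y)) ^ 3)
  (h2 : forall x, ball r y x -> Fly a f gamma lam y x >= Ftilde a f f1 f2 gamma lam y x)
  (h3 : forall x, ball r y x -> Ftilde a f f1 f2 gamma lam y x > 0)
  (halpha_lb : forall x, ball r y x -> alpha <= Fly a f gamma lam y x)
  (halpha_glb : forall b, (forall x, ball r y x -> b <= Fly a f gamma lam y x) -> b <= alpha)
  (halpha : alpha > 0) :
  forall (i : 'I_n) (T : R),
    is_lub (fun v => exists x, ball r y x /\
              v = / INR n * ftilde (a i) (f i) (f1 i) (f2 i) y x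
                  / Ftilde a f f1 f2 gamma lam y x) T ->
    forall x, ball r y x ->
      / INR n * f i (dot (a i) x) / Fly a f gamma lam y x
      <= T + Rmin (C i * r / (6 * INR n * lam)) (C i * r ^ 3 / (6 * INR n * alpha)).
Proof.
move=> i T HT x Hx.
have HN : 0 < INR n.
{ apply: lt_0_INR; apply/ltP; exact: (leq_ltn_trans (leq0n i) (ltn_ord i)). }
have Hyy : ball r y y.
{ rewrite /ball /norm2 dot_sub0 sqrt_0; lra. }
have Ht0 : 0 <= norm2 (vsub x y) by apply: sqrt_pos.
have Hfty : 0 <= ftilde (a i) (f i) (f1 i) (f2 i) y y.
{ rewrite /ftilde dot_sub0. have := hf_nonneg i (dot (a i) y). lra. }
have HT0 : 0 <= T.
{ apply: Rle_trans ((proj1 HT) _ (ex_intro _ y (conj Hyy erefl))).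
  have := h3 y Hyy. move=> H.
  have HiN : 0 <= / INR n by left; apply: Rinv_0_lt_compat.
  rewrite /Rdiv. apply: Rmult_le_pos; first by apply: Rmult_le_pos.
  left; apply: Rinv_0_lt_compat; lra. }
have HTx := (proj1 HT) _ (ex_intro _ x (conj Hx erefl)).
have HlF : lam * norm2 (vsub x y) ^ 2 <= Fly a f gamma lam y x.
{ rewrite /Fly.
  have := @sum_nonneg n (fun j => f j (dot (a j) x)) (fun j => hf_nonneg j _).
  have := hgamma x.
  have HiN : 0 < / INR n by apply: Rinv_0_lt_compat.
  move=> H1 H2. nra. }
have := h2 x Hx. have := h3 x Hx. have := halpha_lb x Hx. have := h1 x Hx i.
move=> He HaF HFt0 HFt.
apply: (key (INR n) (f i (dot (a i) x)) (ftilde (a i) (f i) (f1 i) (f2 i) y x)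
  (Fly a f gamma lam y x) (Ftilde a f f1 f2 gamma lam y x) T (norm2 (vsub x y)) lam alpha (C i) r);
  try lra; try exact: hf_nonneg; try exact: hC; try assumption.
Qed.
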